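(* Let a group $G$ act on a real tree $T$ and let $g,h\in G$ be such that $\langle g,h\rangle$ acts irreducibly on $T$. Suppose that $g$ is either elliptic or equal to $g_0^m$ for some weakly $\lambda$-stable hyperbolic element $g_0$ and some integer $m\ge10\max\{\lambda,1\}$ (with $\lambda>0$), and make the same assumption on $h$. Then the pair $\{g,h\}$ is acylindrical.
   Context: For an isometry $g$: $tl(g)=\inf_p d(p,gp)$; elliptic means having a fixed point, hyperbolic otherwise; $A(g)$ is the fixed set or translation axis. $E(f)$: elements preserving $A(f)$ setwise. Hyperbolic $h$ is weakly $\lambda$-stable if for all $g\in G$, $|A(h)\cap gA(h)|>\lambda tl(h)$ implies $g\in E(h)$. An action is abelian if $tl(gh)\le tl(g)+tl(h)$ for all $g,h$; dihedral if not abelian but this inequality holds for all pairs of hyperbolic elements; irreducible if neither. A pair $g,h$ is acylindrical if $\langle g,h\rangle$ acts irreducibly on $T$, $|A(g)\cap A(h)|\le\frac12\max\{tl(g),tl(h)\}$, and each of $g,h$ that is hyperbolic is weakly $\frac13$-stable. *)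

(* Defs.v *)
From Stdlib Require Import Reals.
From Coquelicot Require Import Rbar Lub.
Open Scope R_scope.

Record Group := {
  gcar :> Type;
  gmul : gcar -> gcar -> gcar;
  ginv : gcar -> gcar;
  gone : gcar;
  gmulA : forall a b c, gmul a (gmul b c) = gmul (gmul a b) c;
  gmul1l : forall a, gmul gone a = a;
  gmulVl : forall a, gmul (ginv a) a = gone
}.
Arguments gmul {G} : rename.
Arguments ginv {G} : rename.
Arguments gone {G} : rename.

Fixpoint gpow {G : Group} (a : G) (n : nat) : G :=
  match n with O => gone | S k => gmul a (gpow a k) end.

Inductive gen2 {G : Group} (g h : G) : G -> Prop :=
| gen2_one : gen2 g h gone
| gen2_g : gen2 g h g
| gen2_h : gen2 g h h
| gen2_inv : forall x, gen2 g h x -> gen2 g h (ginv x)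
| gen2_mul : forall x y, gen2 g h x -> gen2 g h y -> gen2 g h (gmul x y).

Definition gromov {X : Type} (d : X -> X -> R) (w x y : X) : R :=
  (d x w + d y w - d x y) / 2.

Record RealTree := {
  tcar :> Type;
  tdist : tcar -> tcar -> R;
  tpt : tcar;  (* nonempty *)
  tdist_ge0 : forall x y, 0 <= tdist x y;
  tdist_eq0 : forall x y, tdist x y = 0 <-> x = y;
  tdist_sym : forall x y, tdist x y = tdist y x;
  tdist_tri : forall x y z, tdist x z <= tdist x y + tdist y z;
  tgeodesic : forall x y, exists gam : R -> tcar,
      gam 0 = x /\ gam (tdist x y) = y /\
      forall s t, 0 <= s <= tdist x y -> 0 <= t <= tdist x y ->
        tdist (gam s) (gam t) = Rabs (s - t);
  t0hyp : forall w x y z,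
      gromov tdist w x y >= Rmin (gromov tdist w x z) (gromov tdist w y z)
}.
Arguments tdist {T} : rename.

Record Action (G : Group) (T : RealTree) := {
  act : G -> T -> T;
  act_one : forall p, act gone p = p;
  act_mul : forall a b p, act (gmul a b) p = act a (act b p);
  act_isom : forall a p q, tdist (act a p) (act a q) = tdist p q
}.
Arguments act {G T} _ _ _.

Section Notions.
Context {G : Group} {T : RealTree} (A : Action G T).

Definition tl (g : G) : R :=
  real (Glb_Rbar (fun r => exists p : T, r = tdist p (act A g p))).

Definition elliptic (g : G) : Prop := exists p : T, act A g p = p.
Definition hyperbolic (g : G) : Prop := ~ elliptic g.

(* A(g): fixed set if elliptic, translation axis (min set) if hyperbolic *)
Definition Ax (g : G) (p : T) : Prop :=
  (elliptic g /\ act A g p = p) \/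
  (hyperbolic g /\ tdist p (act A g p) = tl g).

Definition img (g : G) (S : T -> Prop) (q : T) : Prop :=
  exists p, S p /\ act A g p = q.

(* |S| : length (diameter) of a subset; -oo if empty, +oo if unbounded *)
Definition len (S : T -> Prop) : Rbar :=
  Lub_Rbar (fun r => exists x y, S x /\ S y /\ r = tdist x y).

Definition inE (f g : G) : Prop :=
  forall q, img g (Ax f) q <-> Ax f q.

Definition weakly_stable (lam : R) (h : G) : Prop :=
  hyperbolic h /\
  forall g : G,
    Rbar_lt (lam * tl h) (len (fun p => Ax h p /\ img g (Ax h) p)) -> inE h g.

Definition abelian2 (g h : G) : Prop :=
  forall a b, gen2 g h a -> gen2 g h b -> tl (gmul a b) <= tl a + tl b.
Definition dihedral2 (g h : G) : Prop :=
  ~ abelian2 g h /\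
  forall a b, gen2 g h a -> gen2 g h b -> hyperbolic a -> hyperbolic b ->
    tl (gmul a b) <= tl a + tl b.
Definition irreducible2 (g h : G) : Prop :=
  ~ abelian2 g h /\ ~ dihedral2 g h.

Definition acylindrical_pair (g h : G) : Prop :=
  irreducible2 g h /\
  Rbar_le (len (fun p => Ax g p /\ Ax h p)) (/2 * Rmax (tl g) (tl h)) /\
  (hyperbolic g -> weakly_stable (1/3) g) /\
  (hyperbolic h -> weakly_stable (1/3) h).

Definition good_elt (lam : R) (g : G) : Prop :=
  elliptic g \/
  exists (g0 : G) (m : nat), weakly_stable lam g0 /\
    INR m >= 10 * Rmax lam 1 /\ g = gpow g0 m.

End Notions.

(* Main.v *)
Require Import Defs.
From Stdlib Require Import Reals Lra Lia ZArith Classical.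
From Coquelicot Require Import Rbar Lub.
Open Scope R_scope.

Lemma nat_unbounded (r : R) : exists n : nat, r < INR n.
Proof.
  destruct (archimed r) as [H1 _].
  destruct (Z_le_gt_dec (up r) 0) as [Hz|Hz].
  - exists 0%nat. simpl. apply IZR_le in Hz. lra.
  - exists (Z.to_nat (up r)). rewrite INR_IZR_INZ, Z2Nat.id by lia. lra.
Qed.

Section Tree.
Context {T : RealTree}.
Notation d := (@tdist T).

Lemma d0 x : d x x = 0. Proof. apply tdist_eq0; auto. Qed.
Lemma dsym x y : d x y = d y x. Proof. apply tdist_sym. Qed.
Lemma dtri x y z : d x z <= d x y + d y z. Proof. apply tdist_tri. Qed.
Lemma dge0 x y : 0 <= d x y. Proof. apply tdist_ge0. Qed.
Lemma deq x y : d x y <= 0 -> x = y.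
Proof. intro H. apply tdist_eq0. pose proof (dge0 x y). lra. Qed.

Lemma fourpt a b c e :
  d a b + d c e <= d a c + d b e \/ d a b + d c e <= d a e + d b c.
Proof.
  pose proof (t0hyp T e a b c) as H. unfold gromov in H.
  unfold Rmin in H. destruct Rle_dec.
  - left. rewrite (dsym c e), (dsym b e), (dsym a e) in *. lra.
  - right. rewrite (dsym c e), (dsym b e), (dsym a e), (dsym b c) in *. lra.
Qed.

Definition isom (F : T -> T) := forall p q, d (F p) (F q) = d p q.

Lemma G1 x y z (g1 g2 : R -> T) s :
  g1 0 = x -> g1 (d x y) = y ->
  (forall s t, 0 <= s <= d x y -> 0 <= t <= d x y -> d (g1 s) (g1 t) = Rabs (s - t)) ->
  g2 0 = x -> g2 (d x z) = z ->
  (forall s t, 0 <= s <= d x z -> 0 <= t <= d x z -> d (g2 s) (g2 t) = Rabs (s - t)) ->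
  0 <= s -> s <= d x y -> s <= d x z -> 2 * s <= d x y + d x z - d y z ->
  g1 s = g2 s.
Proof.
  intros h10 h1D h1 h20 h2D h2 s0 s1 s2 s3.
  set (u := g1 s). set (v := g2 s).
  assert (dxu : d x u = s).
  { unfold u. rewrite <- h10 at 1. rewrite h1 by lra. rewrite Rabs_left1 by lra. lra. }
  assert (duy : d u y = d x y - s).
  { unfold u. rewrite <- h1D at 1. rewrite h1 by lra. rewrite Rabs_left1 by lra. lra. }
  assert (dxv : d x v = s).
  { unfold v. rewrite <- h20 at 1. rewrite h2 by lra. rewrite Rabs_left1 by lra. lra. }
  assert (dvz : d v z = d x z - s).
  { unfold v. rewrite <- h2D at 1. rewrite h2 by lra. rewrite Rabs_left1 by lra. lra. }
  pose proof (dsym v x). pose proof (dsym u x). pose proof (dsym y x). pose proof (dsym z x).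
  pose proof (dsym v y). pose proof (dsym u y). pose proof (dsym v z).
  assert (Hyv : d y v <= d x y - s \/ d y v <= d y z + s - d x z).
  { destruct (fourpt y v z x) as [Hf|Hf]; lra. }
  apply deq.
  destruct (fourpt u v y x) as [Hf|Hf]; lra.
Qed.

Lemma lemA F (HF : isom F) p q : d p (F (F p)) - d p (F p) <= d q (F q).
Proof.
  destruct (fourpt p (F (F p)) (F p) (F q)) as [H|H];
  rewrite ?HF in H;
  pose proof (dtri (F p) (F q) q); pose proof (dtri p (F q) q); pose proof (dtri p q (F q));
  pose proof (dtri (F p) q (F q));
  rewrite ?HF, ?(dsym (F q) q), ?(dsym q (F p)), ?(dsym (F p) p) in *; lra.
Qed.

Lemma construct F (HF : isom F) p :
  exists q, d q (F q) <= Rmax 0 (d p (F (F p)) - d p (F p)).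
Proof.
  set (D := d p (F p)). set (tp := d p (F (F p)) - D).
  assert (tpD : tp <= D). { unfold tp, D. pose proof (dtri p (F p) (F (F p))). rewrite HF in H. lra. }
  set (r := (D - Rmax 0 tp) / 2).
  assert (HM : 0 <= Rmax 0 tp /\ tp <= Rmax 0 tp /\ Rmax 0 tp <= D).
  { pose proof (dge0 p (F p)) as H0; fold D in H0; unfold Rmax; destruct Rle_dec; lra. }
  destruct (tgeodesic T p (F p)) as [gam [g0 [gD gi]]].
  fold D in gD, gi.
  set (g1 := fun u => gam (D - u)).
  set (g2 := fun u => F (gam u)).
  assert (E : g1 r = g2 r).
  { apply (G1 (F p) p (F (F p))).
    - unfold g1. rewrite Rminus_0_r. auto.
    - unfold g1. rewrite dsym. fold D. replace (D - D) with 0 by lra. auto.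
    - intros a b Ha Hb. unfold g1. rewrite dsym in Ha, Hb. fold D in Ha, Hb.
      rewrite gi by lra. replace (D - a - (D - b)) with (b - a) by ring. apply Rabs_minus_sym.
    - unfold g2. rewrite g0. auto.
    - unfold g2. rewrite HF. fold D. rewrite gD. auto.
    - intros a b Ha Hb. unfold g2. rewrite HF. rewrite HF in Ha, Hb. fold D in Ha, Hb.
      apply gi; lra.
    - unfold r. lra.
    - rewrite dsym. fold D. unfold r. lra.
    - rewrite HF. fold D. unfold r. lra.
    - rewrite (dsym (F p) p). fold D. rewrite HF. fold D. unfold r, tp in *. lra. }
  exists (gam r). unfold g1, g2 in E. rewrite <- E.
  rewrite gi by (unfold r; lra).
  unfold r. rewrite Rabs_left1 by lra. lra.
Qed.

Lemma iter_isom F (HF : isom F) n p q : d (Nat.iter n F p) (Nat.iter n F q) = d p q.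
Proof. induction n; simpl; auto. rewrite HF. auto. Qed.

Lemma power F (HF : isom F) tau (Ht : 0 < tau)
  (HP : forall p, d p (F (F p)) = d p (F p) + tau) p :
  forall k, d p (Nat.iter (S k) F p) = d p (F p) + INR k * tau.
Proof.
  set (x := fun i => Nat.iter i F p).
  assert (Hx : forall i j, d (x i) (x (i + j)%nat) = d p (x j)).
  { intros i j. unfold x. rewrite Nat.iter_add. rewrite <- (iter_isom F HF i p).
    reflexivity. }
  assert (Hmain : forall k, d p (x (S k)) = d p (F p) + INR k * tau /\
                    d p (x (S (S k))) = d p (F p) + INR (S k) * tau).
  { induction k.
    - simpl. unfold x; simpl. rewrite HP. split; lra.
    - destruct IHk as [IH1 IH2]. split; auto.
      idtac.
      assert (a1 : d (x (S k)) (x (S (S (S k)))) = d p (F p) + tau).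
      { replace (S (S (S k))) with (S k + 2)%nat by lia. rewrite Hx. unfold x. simpl.
        rewrite HP. auto. }
      assert (a2 : d (x (S k)) (x (S (S k))) = d p (F p)).
      { replace (S (S k)) with (S k + 1)%nat by lia. rewrite Hx. auto. }
      assert (a3 : d (x (S (S k))) (x (S (S (S k)))) = d p (F p)).
      { replace (S (S (S k))) with (S (S k) + 1)%nat by lia. rewrite Hx. auto. }
      rewrite !S_INR in *.
      pose proof (pos_INR k).
      pose proof (dsym (x (S k)) p). pose proof (dsym (x (S (S (S k)))) (x (S (S k)))).
      pose proof (dsym (x (S (S (S k)))) (x (S k))). pose proof (dsym (x (S (S (S k)))) p).
      destruct (fourpt (x (S k)) (x (S (S (S k)))) p (x (S (S k)))) as [Ha|Ha];
      destruct (fourpt p (x (S (S (S k)))) (x (S k)) (x (S (S k)))) as [Hb|Hb];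
      lra. }
  intro k. apply Hmain.
Qed.

End Tree.
Section Grp.
Context {G : Group} {T : RealTree} (A : Action G T).
Notation d := (@tdist T).
Notation ac := (act A).

Lemma act_iter c n p : ac (gpow c n) p = Nat.iter n (ac c) p.
Proof. induction n; simpl. apply act_one. rewrite act_mul. congruence. Qed.

Lemma act_is_isom c : isom (ac c).
Proof. intros p q. apply act_isom. Qed.

Lemma act_invl a p : ac (ginv a) (ac a p) = p.
Proof. rewrite <- act_mul, gmulVl. apply act_one. Qed.

Lemma act_inj a p q : ac a p = ac a q -> p = q.
Proof. intro H. rewrite <- (act_invl a p), <- (act_invl a q). congruence. Qed.

Lemma act_invr a p : ac a (ac (ginv a) p) = p.
Proof. apply (act_inj (ginv a)). rewrite act_invl. auto. Qed.

Lemma tl_spec c : Glb_Rbar (fun r => exists p : T, r = d p (ac c p)) = Finite (tl A c) /\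
  (forall p, tl A c <= d p (ac c p)) /\
  (forall r, (forall p, r <= d p (ac c p)) -> r <= tl A c).
Proof.
  unfold tl.
  destruct (Glb_Rbar_correct (fun r => exists p : T, r = d p (ac c p))) as [Hlb Hg].
  assert (H0 : Rbar_le (Finite 0) (Glb_Rbar (fun r => exists p : T, r = d p (ac c p)))).
  { apply Hg. intros r [p ->]. simpl. apply dge0. }
  assert (H1 : Rbar_le (Glb_Rbar (fun r => exists p : T, r = d p (ac c p))) (d (tpt T) (ac c (tpt T)))).
  { apply Hlb. eauto. }
  destruct (Glb_Rbar (fun r => exists p : T, r = d p (ac c p))) as [l| |] eqn:E;
    simpl in H0, H1; try contradiction.
  simpl. split; auto. split.
  - intro p. specialize (Hlb _ (ex_intro _ p eq_refl)). exact Hlb.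
  - intros r Hr. assert (Hb : Rbar_le r (Finite l)).
    { apply Hg. intros x [p ->]. simpl. apply Hr. }
    exact Hb.
Qed.

Lemma tl_le c p : tl A c <= d p (ac c p).
Proof. apply (tl_spec c). Qed.

Lemma tl_glb c r : (forall p, r <= d p (ac c p)) -> r <= tl A c.
Proof. apply (tl_spec c). Qed.

Lemma tl_ge0 c : 0 <= tl A c.
Proof. apply tl_glb. intro; apply dge0. Qed.

Lemma tl_formula c p : tl A c = Rmax 0 (d p (ac c (ac c p)) - d p (ac c p)).
Proof.
  apply Rle_antisym.
  - destruct (construct (ac c) (act_is_isom c) p) as [q Hq].
    pose proof (tl_le c q). lra.
  - apply Rmax_lub. apply tl_ge0. apply tl_glb. intro q. apply lemA. apply act_is_isom.
Qed.

Lemma ell_iff c p : elliptic A c <-> d p (ac c (ac c p)) - d p (ac c p) <= 0.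
Proof.
  split.
  - intros [q Hq]. pose proof (lemA (ac c) (act_is_isom c) p q). rewrite Hq, d0 in H. lra.
  - intro H. destruct (construct (ac c) (act_is_isom c) p) as [q Hq].
    exists q. rewrite Rmax_left in Hq by lra. symmetry. apply deq. lra.
Qed.

Lemma ell_tl c : elliptic A c -> tl A c = 0.
Proof.
  intros [q Hq]. pose proof (tl_le c q). rewrite Hq, d0 in H. pose proof (tl_ge0 c). lra.
Qed.

Lemma hyp_facts c : hyperbolic A c ->
  0 < tl A c /\ forall p, d p (ac c (ac c p)) = d p (ac c p) + tl A c.
Proof.
  intro Hh.
  assert (Hp : forall p, 0 < d p (ac c (ac c p)) - d p (ac c p)).
  { intro p. destruct (Rlt_le_dec 0 (d p (ac c (ac c p)) - d p (ac c p))); auto.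
    exfalso. apply Hh. apply (ell_iff c p). auto. }
  split.
  - rewrite (tl_formula c (tpt T)). specialize (Hp (tpt T)). rewrite Rmax_right; lra.
  - intro p. rewrite (tl_formula c p). specialize (Hp p). rewrite Rmax_right; lra.
Qed.

Lemma hyp_axis c : hyperbolic A c -> exists p, d p (ac c p) = tl A c.
Proof.
  intro Hh. destruct (construct (ac c) (act_is_isom c) (tpt T)) as [q Hq].
  rewrite <- tl_formula in Hq. exists q. pose proof (tl_le c q). lra.
Qed.

Lemma dpow c k p : hyperbolic A c ->
  d p (ac (gpow c (S k)) p) = d p (ac c p) + INR k * tl A c.
Proof.
  intro Hh. destruct (hyp_facts c Hh) as [H0 H1].
  rewrite act_iter. apply power; auto. apply act_is_isom.
Qed.

Lemma tl_pow c k : hyperbolic A c -> tl A (gpow c (S k)) = INR (S k) * tl A c.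
Proof.
  intro Hh. destruct (hyp_axis c Hh) as [p Hp].
  rewrite (tl_formula _ p).
  assert (E : ac (gpow c (S k)) (ac (gpow c (S k)) p) = ac (gpow c (S (k + S k))) p).
  { rewrite !act_iter, <- Nat.iter_add. f_equal. }
  rewrite E, !dpow by auto. rewrite plus_INR, !S_INR. rewrite Rmax_right.
  - rewrite Hp. ring.
  - pose proof (tl_ge0 c). pose proof (pos_INR k). rewrite Hp. nra.
Qed.

Lemma hyp_pow c k : hyperbolic A c -> hyperbolic A (gpow c (S k)).
Proof.
  intros Hh He. apply ell_tl in He. rewrite tl_pow in He by auto.
  destruct (hyp_facts c Hh) as [H0 _]. pose proof (pos_INR k). rewrite S_INR in He. nra.
Qed.

Lemma ax_pow c k p : hyperbolic A c ->
  (d p (ac (gpow c (S k)) p) = tl A (gpow c (S k)) <-> d p (ac c p) = tl A c).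
Proof.
  intro Hh. rewrite dpow, tl_pow, S_INR by auto. split; intro; lra.
Qed.

End Grp.
Ltac rabs := repeat match goal with
  | |- context [Rabs ?x] => let H := fresh "Ra" in destruct (Rcase_abs x) as [H|H];
        [rewrite (Rabs_left x H) in * | rewrite (Rabs_right x H) in *]
  | H0 : context [Rabs ?x] |- _ => let H := fresh "Ra" in destruct (Rcase_abs x) as [H|H];
        [rewrite (Rabs_left x H) in * | rewrite (Rabs_right x H) in *]
  end.
Ltac rmax := unfold Rmax in *; repeat match goal with
  | |- context [Rle_dec ?x ?y] => destruct (Rle_dec x y)
  | H0 : context [Rle_dec ?x ?y] |- _ => destruct (Rle_dec x y)
  end.

Lemma arith_xK u tau X : 0 <= tau -> Rabs (u + tau) + X = 2 * Rmax (Rabs u) tau -> X = Rabs (u - tau).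
Proof. intros. rmax; rabs; lra. Qed.

Lemma arith_RL tau a b X u : 0 < tau -> Rabs (b - a) = tau -> Rabs (X - a) = Rabs u ->
  Rabs (X - b) = Rabs (u - tau) ->
  (b - a = tau /\ X = a + u) \/ (b - a = - tau /\ X = a - u).
Proof. intros. rabs; first [left; split; lra | right; split; lra | lra]. Qed.

Section Gen.
Context {T : RealTree}.
Notation d := (@tdist T).

Lemma claimM F (HF : isom F) tau x y : d x (F x) = tau -> d x (F (F x)) = 2 * tau ->
  d x (F y) = d x y + tau \/ d (F x) y = d x y + tau.
Proof.
  intros h1 h2.
  pose proof (HF y x). pose proof (HF (F x) x). pose proof (HF x y). pose proof (HF (F x) y).
  pose proof (dtri x (F x) (F y)). pose proof (dtri (F x) x y).
  pose proof (dsym (F (F x)) (F x)). pose proof (dsym (F x) x). pose proof (dsym y x).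
  pose proof (dsym (F (F x)) (F y)). pose proof (dsym (F y) (F x)).
  destruct (fourpt x (F (F x)) (F y) (F x)) as [Hf|Hf]; [left|right]; lra.
Qed.

Lemma side F (HF : isom F) tau w q :
  d w (F w) = tau -> d w (F (F w)) = 2 * tau -> d q (F q) = tau ->
  d q w + d q (F (F w)) = 2 * Rmax (d q (F w)) tau /\
  (d q w = d q (F w) + tau \/ d q (F (F w)) = d q (F w) + tau).
Proof.
  intros h1 h2 h3.
  set (c := F w). set (e := F c).
  assert (dce : d c e = tau). { unfold e, c. rewrite HF. auto. }
  assert (dwe : d w e = 2 * tau). auto.
  assert (dcw : d c w = tau). { rewrite dsym. auto. }
  pose proof (dtri q c w). pose proof (dtri q c e). pose proof (dtri q w c). pose proof (dtri q e c).
  pose proof (dsym c w). pose proof (dsym e c). pose proof (dsym q w). pose proof (dsym q e).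
  pose proof (dsym q c). pose proof (dsym w q). pose proof (dsym e q).
  assert (M : d q w = d q c + tau \/ d q e = d q c + tau).
  { destruct (fourpt w e q c) as [Hf|Hf]; [left|right]; lra. }
  split; auto.
  assert (dFqc : d (F q) c = d q w). { unfold c. apply HF. }
  assert (dFqe : d e (F q) = d c q). { unfold e. apply HF. }
  pose proof (dsym (F q) c). pose proof (dsym e (F q)). pose proof (dsym c e).
  pose proof (dtri w q c). pose proof (dtri c q e).
  destruct M; destruct (fourpt q e (F q) c) as [Hf|Hf]; rmax; lra.
Qed.

Lemma xK F (HF : isom F) (L : T -> Prop) tau (Ht : 0 <= tau)
  (HL : forall p, L p -> L (F p) /\ d p (F p) = tau /\ d p (F (F p)) = 2 * tau)
  q x : L q -> L x -> d q (F x) = Rabs (d q x - tau) ->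
  forall K, d q (Nat.iter K F x) = Rabs (d q x - INR K * tau).
Proof.
  intros Lq Lx h1.
  assert (LK : forall K, L (Nat.iter K F x)).
  { induction K; simpl; auto. apply HL; auto. }
  assert (forall K, d q (Nat.iter K F x) = Rabs (d q x - INR K * tau) /\
                    d q (Nat.iter (S K) F x) = Rabs (d q x - INR (S K) * tau)).
  { induction K.
    - simpl. rewrite Rmult_0_l, Rminus_0_r, Rmult_1_l. split; auto.
      rewrite Rabs_right; auto. apply Rle_ge, dge0.
    - destruct IHK as [I1 I2]. split; auto.
      destruct (HL _ (LK K)) as [_ [a1 a2]]. destruct (HL _ Lq) as [_ [b1 _]].
      destruct (side F HF tau (Nat.iter K F x) q a1 a2 b1) as [S1 _].
      change (F (Nat.iter K F x)) with (Nat.iter (S K) F x) in S1.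
      change (F (Nat.iter (S K) F x)) with (Nat.iter (S (S K)) F x) in S1.
      rewrite I1, I2 in S1.
      replace (d q x - INR K * tau) with (d q x - INR (S K) * tau + tau) in S1 by (rewrite S_INR; ring).
      apply arith_xK in S1; auto. rewrite S1. f_equal. rewrite (S_INR (S K)). ring. }
  intro K. apply H.
Qed.

Lemma same_side F (HF : isom F) (L : T -> Prop) tau (Ht : 0 < tau)
  (HL : forall p, L p -> L (F p) /\ d p (F p) = tau /\ d p (F (F p)) = 2 * tau)
  x0 q r : L x0 -> L q -> L r ->
  d q (F x0) = Rabs (d q x0 - tau) -> d r (F x0) = Rabs (d r x0 - tau) ->
  d q r = Rabs (d x0 q - d x0 r).
Proof.
  intros L0 Lq Lr hq hr.
  destruct (nat_unbounded ((d q x0 + d r x0) / tau)) as [K HK].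
  assert (HK' : d q x0 + d r x0 < INR K * tau).
  { apply (Rmult_lt_compat_r tau) in HK; auto. unfold Rdiv in HK.
    rewrite Rmult_assoc, Rinv_l, Rmult_1_r in HK; lra. }
  set (z := Nat.iter K F x0).
  pose proof (xK F HF L tau (Rlt_le _ _ Ht) HL q x0 Lq L0 hq K) as Eq.
  pose proof (xK F HF L tau (Rlt_le _ _ Ht) HL r x0 Lr L0 hr K) as Er.
  assert (h0 : d x0 (F x0) = Rabs (d x0 x0 - tau)).
  { rewrite d0. destruct (HL _ L0) as [_ [e _]]. rewrite e. rewrite Rabs_left1 by lra. lra. }
  pose proof (xK F HF L tau (Rlt_le _ _ Ht) HL x0 x0 L0 L0 h0 K) as E0.
  fold z in Eq, Er, E0. rewrite d0 in E0.
  pose proof (dge0 q x0). pose proof (dge0 r x0).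
  rewrite Rabs_left1 in Eq, Er, E0 by lra.
  pose proof (dsym q x0). pose proof (dsym r x0). pose proof (dsym z x0). pose proof (dsym r z).
  pose proof (dtri x0 q r). pose proof (dtri x0 r q). pose proof (dsym q r).
  destruct (fourpt q r z x0) as [Hf|Hf]; rabs; lra.
Qed.

Lemma opp_side tau (Ht : 0 < tau) x0 w q r :
  d w x0 = tau ->
  d q w = d q x0 + tau -> d r w = Rabs (d r x0 - tau) ->
  d q r = d x0 q + d x0 r.
Proof.
  intros hw hq hr.
  pose proof (dge0 r x0). pose proof (dsym q x0). pose proof (dsym r x0). pose proof (dsym w r).
  pose proof (dsym q r). pose proof (dtri q x0 r). pose proof (dtri x0 q r).
  pose proof (dsym x0 r). pose proof (dtri x0 r q).
  destruct (fourpt q w r x0) as [Hf|Hf]; rabs; lra.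
Qed.

Lemma convex F (HF : isom F) tau (Ht : 0 <= tau) x y z :
  d x (F x) = tau -> d x (F (F x)) = 2 * tau -> d y (F y) = tau ->
  d x z + d z y = d x y -> d z (F z) <= tau.
Proof.
  intros h1 h2 h3 hz.
  destruct (claimM F HF tau x y h1 h2) as [M|M].
  - pose proof (HF z y). pose proof (dtri z y (F y)). pose proof (dtri (F z) (F x) x).
    pose proof (HF z x). pose proof (dsym (F x) x). pose proof (dsym z x).
    destruct (fourpt z (F z) x (F y)) as [Hf|Hf]; lra.
  - pose proof (HF z y). pose proof (dtri z x (F x)). pose proof (dtri (F z) (F y) y).
    pose proof (HF z x). pose proof (dsym (F y) y). pose proof (dsym z x). pose proof (dsym (F x) x).
    destruct (fourpt z (F z) (F x) y) as [Hf|Hf]; lra.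
Qed.

Lemma orient F (HF : isom F) tau x y :
  d x (F x) = tau -> d y (F y) = tau -> tau < d x y ->
  d x (F y) = d x y + tau -> d (F x) y = d x y - tau.
Proof.
  intros h1 h2 hl hv.
  pose proof (HF x y). pose proof (dtri x (F x) y). pose proof (dsym (F x) x).
  pose proof (dsym (F y) y). pose proof (dsym y (F x)). pose proof (dsym (F y) (F x)).
  destruct (fourpt x (F y) (F x) y) as [Hf|Hf]; lra.
Qed.

End Gen.
Section Axis.
Context {G : Group} {T : RealTree} (A : Action G T).
Notation d := (@tdist T).
Notation ac := (act A).

Definition Lf (f : G) (p : T) : Prop := d p (ac f p) = tl A f.
Definition sc (f : G) (x0 q : T) : R :=
  if Rle_dec (d q (ac f x0)) (d q (ac (ginv f) x0)) then d x0 q else - d x0 q.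

Lemma HLf f : hyperbolic A f -> forall p, Lf f p ->
  Lf f (ac f p) /\ d p (ac f p) = tl A f /\ d p (ac f (ac f p)) = 2 * tl A f.
Proof.
  intros Hh p Hp. unfold Lf in *. destruct (hyp_facts A f Hh) as [_ H].
  split; [|split]; auto.
  - rewrite act_isom. auto.
  - rewrite H, Hp. ring.
Qed.

Lemma HLf' f : hyperbolic A f -> forall p, Lf f p ->
  Lf f (ac (ginv f) p) /\ d p (ac (ginv f) p) = tl A f /\
  d p (ac (ginv f) (ac (ginv f) p)) = 2 * tl A f.
Proof.
  intros Hh.
  assert (K : forall p, Lf f p -> Lf f (ac (ginv f) p) /\ d p (ac (ginv f) p) = tl A f).
  { intros p Hp. unfold Lf in *.
    assert (E : d (ac (ginv f) p) p = tl A f).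
    { rewrite <- Hp. rewrite <- (act_isom _ _ A f). rewrite act_invr. auto. }
    rewrite act_invr. split; auto. rewrite dsym; auto. }
  intros p Hp. destruct (K p Hp) as [K1 K2]. destruct (K _ K1) as [K3 K4].
  split; auto. split; auto.
  set (p'' := ac (ginv f) (ac (ginv f) p)).
  destruct (HLf f Hh p'' K3) as [_ [_ E]].
  unfold p'' in E. rewrite !act_invr in E. fold p'' in E. rewrite dsym. auto.
Qed.

Lemma posneg f x0 q : hyperbolic A f -> Lf f x0 -> Lf f q ->
  (d q (ac f x0) <= d q (ac (ginv f) x0) ->
     d q (ac (ginv f) x0) = d x0 q + tl A f /\ d q (ac f x0) = Rabs (d x0 q - tl A f)) /\
  (~ d q (ac f x0) <= d q (ac (ginv f) x0) ->
     d q (ac f x0) = d x0 q + tl A f /\ d q (ac (ginv f) x0) = Rabs (d x0 q - tl A f)).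
Proof.
  intros Hh L0 Lq.
  set (w := ac (ginv f) x0).
  destruct (HLf' f Hh x0 L0) as [Lw [dw _]].
  destruct (HLf f Hh w Lw) as [_ [a1 a2]].
  destruct (HLf f Hh q Lq) as [_ [b1 _]].
  destruct (side (ac f) (act_is_isom A f) (tl A f) w q a1 a2 b1) as [S1 S2].
  unfold w in S1, S2. rewrite act_invr in S1, S2. fold w in S1, S2.
  pose proof (dtri q x0 w). pose proof (dtri q x0 (ac f x0)).
  destruct (HLf f Hh x0 L0) as [_ [c1 _]].
  pose proof (dsym q x0). pose proof (dge0 x0 q). pose proof (tl_ge0 A f).
  split; intro C; destruct S2; split; rmax; rabs; lra.
Qed.

Lemma s_iso f x0 q r : hyperbolic A f -> Lf f x0 -> Lf f q -> Lf f r ->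
  d q r = Rabs (sc f x0 q - sc f x0 r).
Proof.
  intros Hh L0 Lq Lr.
  destruct (hyp_facts A f Hh) as [Ht _].
  destruct (posneg f x0 q Hh L0 Lq) as [Pq Nq].
  destruct (posneg f x0 r Hh L0 Lr) as [Pr Nr].
  assert (HL1 : forall p, Lf f p -> Lf f (ac f p) /\ d p (ac f p) = tl A f /\ d p (ac f (ac f p)) = 2 * tl A f)
    by (apply HLf; auto).
  assert (HL2 : forall p, Lf f p -> Lf f (ac (ginv f) p) /\ d p (ac (ginv f) p) = tl A f /\
     d p (ac (ginv f) (ac (ginv f) p)) = 2 * tl A f) by (apply HLf'; auto).
  destruct (HL2 x0 L0) as [_ [dw _]].
  pose proof (dsym q x0). pose proof (dsym r x0). pose proof (dge0 x0 q). pose proof (dge0 x0 r).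
  pose proof (dsym (ac (ginv f) x0) x0).
  unfold sc. destruct (Rle_dec (d q (ac f x0)) (d q (ac (ginv f) x0))) as [cq|cq];
  destruct (Rle_dec (d r (ac f x0)) (d r (ac (ginv f) x0))) as [cr|cr].
  - destruct (Pq cq) as [_ e1]. destruct (Pr cr) as [_ e2].
    apply (same_side (ac f) (act_is_isom A f) (Lf f) (tl A f) Ht HL1 x0 q r L0 Lq Lr).
    + rewrite e1. f_equal. lra.
    + rewrite e2. f_equal. lra.
  - destruct (Pq cq) as [e1 _]. destruct (Nr cr) as [_ e2].
    rewrite (opp_side (tl A f) Ht x0 (ac (ginv f) x0) q r); try lra.
    + rabs; lra.
    + rewrite e2. f_equal. lra.
  - destruct (Nq cq) as [_ e1]. destruct (Pr cr) as [e2 _].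
    rewrite dsym. rewrite (opp_side (tl A f) Ht x0 (ac (ginv f) x0) r q); try lra.
    + rabs; lra.
    + rewrite e1. f_equal. lra.
  - destruct (Nq cq) as [_ e1]. destruct (Nr cr) as [_ e2].
    rewrite (same_side (ac (ginv f)) (act_is_isom A (ginv f)) (Lf f) (tl A f) Ht HL2 x0 q r L0 Lq Lr).
    + rabs; lra.
    + rewrite e1. f_equal. lra.
    + rewrite e2. f_equal. lra.
Qed.

End Axis.
Section Trans.
Context {G : Group} {T : RealTree} (A : Action G T).
Notation d := (@tdist T).
Notation ac := (act A).
Notation Lf := (Lf A).
Notation sc := (sc A).

Lemma sc_x0 f x0 : sc f x0 x0 = 0.
Proof. unfold sc. rewrite d0. destruct Rle_dec; lra. Qed.

Lemma sc_x1 f x0 : Lf f x0 -> sc f x0 (ac f x0) = tl A f.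
Proof.
  intro L0. unfold sc. rewrite d0. destruct Rle_dec as [_|n].
  - apply L0.
  - exfalso. apply n. apply dge0.
Qed.

Lemma trans_form f x0 (C : T -> T) : hyperbolic A f -> Lf f x0 -> isom C ->
  (forall q, Lf f q -> Lf f (C q)) ->
  exists e a, (e = 1 \/ e = -1) /\ forall q, Lf f q -> sc f x0 (C q) = e * sc f x0 q + a.
Proof.
  intros Hh L0 HC HCL.
  destruct (hyp_facts A f Hh) as [Ht _].
  set (x1 := ac f x0).
  assert (L1 : Lf f x1) by (apply (HLf A f Hh x0 L0)).
  set (a := sc f x0 (C x0)). set (b := sc f x0 (C x1)).
  assert (Hab : Rabs (b - a) = tl A f).
  { unfold a, b. rewrite <- s_iso by auto. rewrite HC. rewrite dsym. apply L0. }
  assert (Hq : forall q, Lf f q -> Rabs (sc f x0 (C q) - a) = Rabs (sc f x0 q) /\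
                                  Rabs (sc f x0 (C q) - b) = Rabs (sc f x0 q - tl A f)).
  { intros q Lq. unfold a, b. rewrite <- !s_iso by auto. rewrite !HC.
    rewrite (s_iso A f x0 q x0), (s_iso A f x0 q x1) by auto.
    unfold x1. rewrite sc_x0, sc_x1, Rminus_0_r by auto. auto. }
  destruct (Req_dec (b - a) (tl A f)) as [E|E].
  - exists 1, a. split; auto. intros q Lq. destruct (Hq q Lq) as [h1 h2].
    destruct (arith_RL _ _ _ _ _ Ht Hab h1 h2) as [[_ X]|[X _]]; lra.
  - exists (-1), a. split; auto. intros q Lq. destruct (Hq q Lq) as [h1 h2].
    destruct (arith_RL _ _ _ _ _ Ht Hab h1 h2) as [[X _]|[_ X]]; lra.
Qed.

Lemma trans_hyp f x0 (C : T -> T) : hyperbolic A f -> Lf f x0 -> isom C ->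
  (forall q, Lf f q -> Lf f (C q)) -> (forall q, Lf f q -> C (C q) <> q) ->
  exists a, forall q, Lf f q -> sc f x0 (C q) = sc f x0 q + a.
Proof.
  intros Hh L0 HC HCL Hn.
  destruct (trans_form f x0 C Hh L0 HC HCL) as [e [a [[-> | ->] He]]].
  - exists a. intros q Lq. rewrite He; auto. ring.
  - exfalso. apply (Hn x0 L0).
    assert (E : sc f x0 (C (C x0)) = sc f x0 x0).
    { rewrite He by auto. rewrite He by auto. rewrite sc_x0. ring. }
    apply deq. rewrite (s_iso A f x0) by auto. rewrite E. rewrite Rminus_diag, Rabs_R0. lra.
Qed.

Lemma trans_fix f x0 (C : T -> T) x' y' : hyperbolic A f -> Lf f x0 -> isom C ->
  (forall q, Lf f q -> Lf f (C q)) -> Lf f x' -> Lf f y' -> C x' = x' -> C y' = y' -> 0 < d x' y' ->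
  forall q, Lf f q -> sc f x0 (C q) = sc f x0 q.
Proof.
  intros Hh L0 HC HCL Lx Ly Cx Cy Dxy.
  destruct (trans_form f x0 C Hh L0 HC HCL) as [e [a [[-> | ->] He]]].
  - pose proof (He x' Lx). rewrite Cx in H. intros q Lq. rewrite He; auto. lra.
  - exfalso. pose proof (He x' Lx). pose proof (He y' Ly). rewrite Cx in H. rewrite Cy in H0.
    rewrite (s_iso A f x0) in Dxy by auto.
    assert (sc f x0 x' = sc f x0 y') by lra. rewrite H1, Rminus_diag, Rabs_R0 in Dxy. lra.
Qed.

Definition Tf f x0 c t := forall q, Lf f q -> Lf f (ac c q) /\ (exists r, Lf f r /\ ac c r = q) /\
  sc f x0 (ac c q) = sc f x0 q + t.

Lemma Tf_one f x0 : Tf f x0 gone 0.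
Proof. intros q Lq. rewrite act_one. split; auto. split. exists q. rewrite act_one. auto. ring. Qed.

Lemma Tf_mul f x0 a b ta tb : Tf f x0 a ta -> Tf f x0 b tb -> Tf f x0 (gmul a b) (ta + tb).
Proof.
  intros Ha Hb q Lq. rewrite act_mul.
  destruct (Hb q Lq) as [Lb [[r [Lr Er]] Sb]].
  destruct (Ha _ Lb) as [La [_ Sa]].
  split; auto. split.
  - destruct (Ha q Lq) as [_ [[r1 [Lr1 Er1]] _]].
    destruct (Hb r1 Lr1) as [_ [[r2 [Lr2 Er2]] _]].
    exists r2. split; auto. rewrite act_mul, Er2. auto.
  - rewrite Sa, Sb. ring.
Qed.

Lemma Tf_inv f x0 a ta : Tf f x0 a ta -> Tf f x0 (ginv a) (- ta).
Proof.
  intros Ha q Lq.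
  destruct (Ha q Lq) as [La [[r [Lr Er]] Sa]].
  assert (E : ac (ginv a) q = r) by (rewrite <- Er; apply act_invl).
  rewrite E. split; auto. split.
  - exists (ac a q). split; auto. apply act_invl.
  - destruct (Ha r Lr) as [_ [_ S]]. rewrite Er in S. lra.
Qed.

Lemma Tf_pow f x0 a ta n : Tf f x0 a ta -> Tf f x0 (gpow a n) (INR n * ta).
Proof.
  intro Ha. induction n.
  - simpl. rewrite Rmult_0_l. apply Tf_one.
  - simpl gpow. rewrite S_INR. replace ((INR n + 1) * ta) with (ta + INR n * ta) by ring.
    apply Tf_mul; auto.
Qed.

Lemma Tf_tl f x0 c t : hyperbolic A f -> Lf f x0 -> Tf f x0 c t -> tl A c = Rabs t.
Proof.
  intros Hh L0 Hc.
  rewrite (tl_formula A c x0).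
  destruct (Hc x0 L0) as [L1 [_ S1]].
  destruct (Hc _ L1) as [L2 [_ S2]].
  rewrite (s_iso A f x0 x0 (ac c (ac c x0))), (s_iso A f x0 x0 (ac c x0)) by auto.
  rewrite S2, S1.
  replace (sc f x0 x0 - (sc f x0 x0 + t + t)) with (-(2 * t)) by ring.
  replace (sc f x0 x0 - (sc f x0 x0 + t)) with (- t) by ring.
  rewrite !Rabs_Ropp. rmax; rabs; lra.
Qed.

Lemma Tf_gen2 f x0 g h tg th : Tf f x0 g tg -> Tf f x0 h th ->
  forall a, gen2 g h a -> exists t, Tf f x0 a t.
Proof.
  intros Hg Hh a Ha. induction Ha.
  - exists 0. apply Tf_one.
  - eauto.
  - eauto.
  - destruct IHHa as [t Ht]. exists (-t). apply Tf_inv; auto.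
  - destruct IHHa1 as [t1 H1]. destruct IHHa2 as [t2 H2]. exists (t1 + t2). apply Tf_mul; auto.
Qed.

Lemma AB f x0 g h tg th : hyperbolic A f -> Lf f x0 -> Tf f x0 g tg -> Tf f x0 h th ->
  abelian2 A g h.
Proof.
  intros Hf L0 Hg Hh a b Ha Hb.
  destruct (Tf_gen2 f x0 g h tg th Hg Hh a Ha) as [ta Ta].
  destruct (Tf_gen2 f x0 g h tg th Hg Hh b Hb) as [tb Tb].
  rewrite (Tf_tl f x0 _ _ Hf L0 Ta), (Tf_tl f x0 _ _ Hf L0 Tb),
    (Tf_tl f x0 _ _ Hf L0 (Tf_mul f x0 a b ta tb Ta Tb)).
  apply Rabs_triang.
Qed.

End Trans.
Section Main.
Context {G : Group} {T : RealTree} (A : Action G T).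
Notation d := (@tdist T).
Notation ac := (act A).

Lemma len_gt (S : T -> Prop) r : (exists x y, S x /\ S y /\ r < d x y) -> Rbar_lt r (len S).
Proof.
  intros [x [y [Sx [Sy H]]]]. unfold len.
  destruct (Lub_Rbar_correct (fun r => exists x y, S x /\ S y /\ r = d x y)) as [Hub _].
  apply (Rbar_lt_le_trans _ (Finite (d x y))). simpl; auto.
  apply Hub. eauto.
Qed.

Lemma len_le (S : T -> Prop) c : (forall x y, S x -> S y -> d x y <= c) -> Rbar_le (len S) c.
Proof.
  intros H. unfold len.
  destruct (Lub_Rbar_correct (fun r => exists x y, S x /\ S y /\ r = d x y)) as [_ Hl].
  apply Hl. intros r [x [y [Sx [Sy ->]]]]. simpl. auto.
Qed.

Lemma Ax_hyp c p : hyperbolic A c -> (Ax A c p <-> Lf A c p).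
Proof.
  intros Hh. unfold Ax, Lf. split.
  - intros [[He _]|[_ E]]; [contradiction|auto].
  - intro E. right. auto.
Qed.

Lemma Ax_ell c p : elliptic A c -> (Ax A c p <-> ac c p = p).
Proof.
  intros He. unfold Ax. split.
  - intros [[_ E]|[Hh _]]; [auto|contradiction].
  - intro E. left. auto.
Qed.

Lemma good_hyp lam k : good_elt A lam k -> ~ elliptic A k ->
  exists k0 j, weakly_stable A lam k0 /\ INR (S j) >= 10 * Rmax lam 1 /\ k = gpow k0 (S j).
Proof.
  intros [He|[k0 [m [Ws [Hm ->]]]]] Hn; [contradiction|].
  destruct m.
  - exfalso. simpl in Hm. pose proof (Rmax_r lam 1). lra.
  - eauto.
Qed.

Lemma Tf_pres f x0 c : hyperbolic A f -> Lf A f x0 -> hyperbolic A c ->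
  (forall q, Lf A f q -> Lf A f (ac c q)) -> (forall q, Lf A f q -> exists r, Lf A f r /\ ac c r = q) ->
  exists t, Tf A f x0 c t.
Proof.
  intros Hf L0 Hc H1 H2.
  destruct (trans_hyp A f x0 (ac c) Hf L0 (act_is_isom A c) H1) as [t Ht].
  - intros q Lq E. destruct (hyp_facts A c Hc) as [P Q]. specialize (Q q). rewrite E, d0 in Q.
    pose proof (dge0 q (ac c q)). lra.
  - exists t. intros q Lq. split; auto.
Qed.

Lemma Tf_self f x0 : hyperbolic A f -> Lf A f x0 -> exists t, Tf A f x0 f t.
Proof.
  intros Hf L0. apply Tf_pres; auto.
  - intros q Lq. apply (HLf A f Hf q Lq).
  - intros q Lq. exists (ac (ginv f) q). split. apply (HLf' A f Hf q Lq). apply act_invr.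
Qed.

Lemma ws_pow lam g0 m : 0 < lam -> weakly_stable A lam g0 -> INR m >= 10 * Rmax lam 1 ->
  weakly_stable A (1/3) (gpow g0 m).
Proof.
  intros Hl [Hh Ws] Hm.
  destruct m as [|j].
  { exfalso. simpl in Hm. pose proof (Rmax_r lam 1). lra. }
  assert (Hg : hyperbolic A (gpow g0 (S j))) by (apply hyp_pow; auto).
  assert (AxE : forall p, Ax A (gpow g0 (S j)) p <-> Ax A g0 p).
  { intro p. rewrite Ax_hyp, Ax_hyp by auto. unfold Lf. apply ax_pow; auto. }
  assert (ImE : forall k q, img A k (Ax A (gpow g0 (S j))) q <-> img A k (Ax A g0) q).
  { intros k q. unfold img. split; intros [p [P1 P2]]; exists p; split; auto; apply AxE; auto. }
  split; auto. intros k Hk.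
  assert (LE : len (fun p => Ax A (gpow g0 (S j)) p /\ img A k (Ax A (gpow g0 (S j))) p) =
               len (fun p => Ax A g0 p /\ img A k (Ax A g0) p)).
  { unfold len. apply Lub_Rbar_eqset. intro r. split.
    - intros [x [y [[a1 a2] [[b1 b2] ->]]]]. exists x, y. rewrite AxE, ImE in *. tauto.
    - intros [x [y [[a1 a2] [[b1 b2] ->]]]]. exists x, y. rewrite <- AxE, <- ImE in *. tauto. }
  rewrite LE in Hk.
  assert (Hin : inE A g0 k).
  { apply Ws. apply (Rbar_le_lt_trans _ (Finite (1/3 * tl A (gpow g0 (S j))))); auto.
    change (lam * tl A g0 <= 1 / 3 * tl A (gpow g0 (S j))). rewrite tl_pow by auto. pose proof (tl_ge0 A g0). pose proof (Rmax_l lam 1).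
    assert (INR (S j) >= 3 * lam) by lra.
    assert (INR (S j) * tl A g0 >= 3 * lam * tl A g0).
    { apply Rle_ge, Rmult_le_compat_r; lra. }
    lra. }
  intro q. rewrite ImE, AxE. apply Hin.
Qed.

Lemma core_EH lam e k x y : 0 < lam -> elliptic A e -> ~ elliptic A k -> good_elt A lam k ->
  ac e x = x -> ac e y = y -> Ax A k x -> Ax A k y -> / 2 * tl A k < d x y ->
  exists f x0 te tk, hyperbolic A f /\ Lf A f x0 /\ Tf A f x0 e te /\ Tf A f x0 k tk.
Proof.
  intros Hl He Hk Hg Ex Ey Ax1 Ay1 Hd.
  destruct (good_hyp lam k Hg Hk) as [k0 [j [[Hk0 Ws] [Hj ->]]]].
  rewrite Ax_hyp in Ax1, Ay1 by auto. unfold Lf in Ax1, Ay1.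
  rewrite ax_pow in Ax1, Ay1 by auto. fold (Lf A k0 x) in Ax1. fold (Lf A k0 y) in Ay1.
  rewrite tl_pow in Hd by auto.
  assert (Hd2 : lam * tl A k0 < d x y).
  { pose proof (tl_ge0 A k0). pose proof (Rmax_l lam 1).
    assert (INR (S j) * tl A k0 >= 10 * lam * tl A k0) by (apply Rle_ge, Rmult_le_compat_r; lra).
    pose proof (Rmult_le_pos lam (tl A k0)). lra. }
  assert (Hin : inE A k0 e).
  { apply Ws. apply len_gt. exists x, y.
    split; [split|split; [split|]]; auto.
    - apply Ax_hyp; auto.
    - exists x. split; auto. apply Ax_hyp; auto.
    - apply Ax_hyp; auto.
    - exists y. split; auto. apply Ax_hyp; auto. }
  assert (M1 : forall q, Lf A k0 q -> Lf A k0 (ac e q)).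
  { intros q Lq. apply (Ax_hyp k0); auto. apply Hin. exists q. split; auto. apply Ax_hyp; auto. }
  assert (M2 : forall q, Lf A k0 q -> exists r, Lf A k0 r /\ ac e r = q).
  { intros q Lq. apply Ax_hyp in Lq; auto. apply Hin in Lq. destruct Lq as [r [Ar Er]].
    exists r. split; auto. apply Ax_hyp; auto. }
  exists k0, x, 0.
  destruct (Tf_self k0 x Hk0 Ax1) as [t Ht].
  exists (INR (S j) * t). split; auto. split; auto. split.
  - intros q Lq. split; auto. split; auto.
    rewrite Rplus_0_r. apply (trans_fix A k0 x (ac e) x y); auto.
    + apply act_is_isom.
    + pose proof (tl_ge0 A k0). pose proof (Rmax_l lam 1). pose proof (Rmult_le_pos lam (tl A k0)). lra.
  - apply Tf_pow. auto.
Qed.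

Lemma HHstep g0 h0 x y : hyperbolic A g0 -> hyperbolic A h0 ->
  Lf A g0 x -> Lf A g0 y -> Lf A h0 x -> Lf A h0 y -> tl A h0 < d x y ->
  d x (ac h0 y) = d x y + tl A h0 ->
  exists p p', Lf A g0 p /\ Lf A g0 p' /\ (exists u, Lf A g0 u /\ ac h0 u = p) /\
     (exists u, Lf A g0 u /\ ac h0 u = p') /\ d p p' = d x y - tl A h0.
Proof.
  intros Hg Hh Lgx Lgy Lhx Lhy Hl Hv.
  pose proof (orient (ac h0) (act_is_isom A h0) (tl A h0) x y Lhx Lhy Hl Hv) as O.
  destruct (HLf A g0 Hg x Lgx) as [_ [gx1 gx2]].
  destruct (HLf A g0 Hg y Lgy) as [_ [gy1 _]].
  pose proof (tl_ge0 A g0) as T0.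
  assert (Conv : forall z, d x z + d z y = d x y -> Lf A g0 z).
  { intros z Hz. unfold Lf. apply Rle_antisym.
    - apply (convex (ac g0) (act_is_isom A g0) (tl A g0) T0 x y z); auto.
    - apply tl_le. }
  exists (ac h0 x), y. split; [|split; [|split; [|split]]]; auto.
  - apply Conv. rewrite O. unfold Lf in Lhx. rewrite Lhx. ring.
  - exists x. split; auto.
  - exists (ac (ginv h0) y). split; [|apply act_invr].
    apply Conv.
    assert (E1 : d x (ac (ginv h0) y) = d (ac h0 x) y).
    { rewrite <- (act_isom _ _ A h0 x). rewrite act_invr. auto. }
    assert (E2 : d (ac (ginv h0) y) y = tl A h0).
    { rewrite <- (act_isom _ _ A h0). rewrite act_invr. apply Lhy. }
    rewrite E1, E2, O. ring.
Qed.

Lemma core_HH lam g h x y : 0 < lam -> ~ elliptic A g -> ~ elliptic A h ->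
  good_elt A lam g -> good_elt A lam h ->
  Ax A g x -> Ax A g y -> Ax A h x -> Ax A h y -> / 2 * Rmax (tl A g) (tl A h) < d x y ->
  abelian2 A g h.
Proof.
  intros Hl Hg Hh Gg Gh Agx Agy Ahx Ahy Hd.
  destruct (good_hyp lam g Gg Hg) as [g0 [i [[Hg0 Wg] [Hi ->]]]].
  destruct (good_hyp lam h Gh Hh) as [h0 [j [[Hh0 Wh] [Hj ->]]]].
  rewrite Ax_hyp in Agx, Agy, Ahx, Ahy by auto. unfold Lf in Agx, Agy, Ahx, Ahy.
  rewrite ax_pow in Agx, Agy, Ahx, Ahy by auto.
  fold (Lf A g0 x) in Agx. fold (Lf A g0 y) in Agy. fold (Lf A h0 x) in Ahx. fold (Lf A h0 y) in Ahy.
  rewrite !tl_pow in Hd by auto.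
  destruct (hyp_facts A g0 Hg0) as [t1 _]. destruct (hyp_facts A h0 Hh0) as [t2 _].
  set (L := Rmax lam 1) in *.
  assert (HL1 : 1 <= L) by apply Rmax_r. assert (HL2 : lam <= L) by apply Rmax_l.
  assert (B1 : INR (S i) * tl A g0 >= 10 * (L * tl A g0)) by (apply Rle_ge; rewrite <- Rmult_assoc; apply Rmult_le_compat_r; lra).
  assert (B2 : INR (S j) * tl A h0 >= 10 * (L * tl A h0)) by (apply Rle_ge; rewrite <- Rmult_assoc; apply Rmult_le_compat_r; lra).
  assert (B3 : L * tl A h0 >= tl A h0) by (apply Rle_ge; rewrite <- (Rmult_1_l (tl A h0)) at 1; apply Rmult_le_compat_r; lra).
  assert (B4 : L * tl A g0 >= lam * tl A g0) by (apply Rle_ge; apply Rmult_le_compat_r; lra).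
  assert (B5 : lam * tl A g0 > 0) by (apply Rmult_lt_0_compat; lra).
  assert (M1 : INR (S i) * tl A g0 <= Rmax (INR (S i) * tl A g0) (INR (S j) * tl A h0)) by apply Rmax_l.
  assert (M2 : INR (S j) * tl A h0 <= Rmax (INR (S i) * tl A g0) (INR (S j) * tl A h0)) by apply Rmax_r.
  assert (Dl : tl A h0 < d x y) by lra.
  assert (Dgap : lam * tl A g0 < d x y - tl A h0) by lra.
  assert (Pts : exists p p', Lf A g0 p /\ Lf A g0 p' /\ (exists u, Lf A g0 u /\ ac h0 u = p) /\
     (exists u, Lf A g0 u /\ ac h0 u = p') /\ d p p' = d x y - tl A h0).
  { destruct (claimM (ac h0) (act_is_isom A h0) (tl A h0) x y) as [C|C].
    - apply Ahx.
    - apply (HLf A h0 Hh0 x Ahx).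
    - apply HHstep; auto.
    - rewrite (dsym x y) in *. apply HHstep; auto. rewrite dsym. auto. }
  destruct Pts as [p [p' [Lp [Lp' [[u [Lu Eu]] [[u' [Lu' Eu']] Dp]]]]]].
  assert (Hin : inE A g0 h0).
  { apply Wg. apply len_gt. exists p, p'.
    split; [split|split; [split|]].
    - apply Ax_hyp; auto.
    - exists u. split; auto. apply Ax_hyp; auto.
    - apply Ax_hyp; auto.
    - exists u'. split; auto. apply Ax_hyp; auto.
    - lra. }
  assert (N1 : forall q, Lf A g0 q -> Lf A g0 (ac h0 q)).
  { intros q Lq. apply (Ax_hyp g0); auto. apply Hin. exists q. split; auto. apply Ax_hyp; auto. }
  assert (N2 : forall q, Lf A g0 q -> exists r, Lf A g0 r /\ ac h0 r = q).
  { intros q Lq. apply Ax_hyp in Lq; auto. apply Hin in Lq. destruct Lq as [r [Ar Er]].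
    exists r. split; auto. apply Ax_hyp; auto. }
  destruct (Tf_self g0 x Hg0 Agx) as [ta Ta].
  destruct (Tf_pres g0 x h0 Hg0 Agx Hh0 N1 N2) as [tb Tb].
  apply (AB A g0 x _ _ (INR (S i) * ta) (INR (S j) * tb) Hg0 Agx); apply Tf_pow; auto.
Qed.

End Main.
Section Final.
Context {G : Group} {T : RealTree} (A : Action G T).
Notation d := (@tdist T).
Notation ac := (act A).

Lemma fixed_abelian g h x : ac g x = x -> ac h x = x -> abelian2 A g h.
Proof.
  intros Hg Hh.
  assert (F : forall a, gen2 g h a -> ac a x = x).
  { intros a Ha. induction Ha; auto.
    - apply act_one.
    - rewrite <- IHHa at 1. apply act_invl.
    - rewrite act_mul, IHHa2, IHHa1. auto. }
  assert (Z : forall a, gen2 g h a -> tl A a = 0).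
  { intros a Ha. pose proof (tl_le A a x). rewrite F, d0 in H by auto. pose proof (tl_ge0 A a). lra. }
  intros a b Ha Hb. rewrite (Z a), (Z b), (Z (gmul a b)) by (auto; apply gen2_mul; auto). lra.
Qed.

End Final.

Theorem mainTheorem11 (G : Group) (T : RealTree) (A : Action G T)
  (g h : G) (lam : R) :
  0 < lam ->
  irreducible2 A g h ->
  good_elt A lam g ->
  good_elt A lam h ->
  acylindrical_pair A g h.
Proof.
  intros Hl Hirr Gg Gh.
  split; [exact Hirr|split; [|split]].
  - apply len_le. intros x y [Agx Ahx] [Agy Ahy].
    destruct (Rle_lt_dec (tdist x y) (/ 2 * Rmax (tl A g) (tl A h))) as [ok|bad]; auto.
    exfalso. apply (proj1 Hirr).
    destruct (classic (elliptic A g)) as [Eg|Eg]; destruct (classic (elliptic A h)) as [Eh|Eh].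
    + apply Ax_ell in Agx; auto. apply Ax_ell in Ahx; auto. apply (fixed_abelian A g h x); auto.
    + rewrite (ell_tl A g Eg), Rmax_right in bad by apply tl_ge0.
      apply Ax_ell in Agx; auto. apply Ax_ell in Agy; auto.
      destruct (core_EH A lam g h x y Hl Eg Eh Gh Agx Agy Ahx Ahy bad) as [f [x0 [te [tk [Hf [L0 [Te Tk]]]]]]].
      apply (AB A f x0 g h te tk); auto.
    + rewrite (ell_tl A h Eh), Rmax_left in bad by apply tl_ge0.
      apply Ax_ell in Ahx; auto. apply Ax_ell in Ahy; auto.
      destruct (core_EH A lam h g x y Hl Eh Eg Gg Ahx Ahy Agx Agy bad) as [f [x0 [te [tk [Hf [L0 [Te Tk]]]]]]].
      apply (AB A f x0 g h tk te); auto.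
    + apply (core_HH A lam g h x y); auto.
  - intro Hg. destruct Gg as [E|[g0 [m [W [Hm ->]]]]]; [contradiction|].
    apply (ws_pow A lam); auto.
  - intro Hh. destruct Gh as [E|[h0 [m [W [Hm ->]]]]]; [contradiction|].
    apply (ws_pow A lam); auto.
Qed.
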